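(* For every $k\in\mathbb{N}$ there exists an instance $\mathcal{I}$ of the Strip Packing Problem in which all rectangles are squares, together with an initial ordering of its squares, such that the bottom-left $k$-local search algorithm started from this ordering returns a packing of height $h_{\text{$k$-BL}}(\mathcal{I}) = 2\cdot h_{\text{OPT}}(\mathcal{I})$.
   Context: Strip Packing Problem: given a strip width $W>0$ and rectangles $r_1,\dots,r_n$ with widths $w_i\le W$ and heights $h_i$, a packing assigns to each $r_i$ a lower-left corner $(x_i,y_i)$; it is feasible if $x_i\ge 0$, $x_i+w_i\le W$, $y_i\ge 0$ and the open rectangles $(x_i,x_i+w_i)\times(y_i,y_i+h_i)$ are pairwise disjoint; no rotations. The height of a packing is $\max_i(y_i+h_i)$ and $h_{\text{OPT}}(\mathcal{I})$ is the minimum height of a feasible packing. Bottom-left algorithm: given an ordering, place the first rectangle at $(0,0)$ and then each subsequent rectangle at a feasible position $(x,y)$ (feasible together with those already placed) with $(y,x)$ lexicographically minimal. Bottom-left $k$-local search algorithm: start with an initial ordering and its bottom-left packing. In each iteration (improvement step), look for a new ordering obtained from the current one by permuting at most $k$ rectangles in the ordering such that the bottom-left packing of the new ordering has strictly smaller height; if one exists, replace the current ordering by it. Stop when no such improvement exists (a local optimum). $h_{\text{$k$-BL}}(\mathcal{I})$ denotes the height of the returned packing. *)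

(* Defs.v *)
From Stdlib Require Import Reals Lra Lia List Permutation Arith.
Import ListNotations.
Open Scope R_scope.

Record instance := mkInstance {
  W : R;
  n : nat;
  wd : nat -> R;
  ht : nat -> R
}.

Definition valid_instance (I : instance) : Prop :=
  0 < W I /\
  forall i, (i < n I)%nat -> 0 < wd I i /\ wd I i <= W I /\ 0 < ht I i.

Definition all_squares (I : instance) : Prop :=
  forall i, (i < n I)%nat -> wd I i = ht I i.

(** A placement assigns to each rectangle its lower-left corner (x, y). *)
Definition placement := nat -> (R * R).

Definition in_strip (I : instance) (i : nat) (c : R * R) : Prop :=
  0 <= fst c /\ fst c + wd I i <= W I /\ 0 <= snd c.

Definition open_disjoint (I : instance) (i : nat) (ci : R * R)
    (j : nat) (cj : R * R) : Prop :=
  ~ exists a b : R,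
      fst ci < a < fst ci + wd I i /\ snd ci < b < snd ci + ht I i /\
      fst cj < a < fst cj + wd I j /\ snd cj < b < snd cj + ht I j.

Definition feasible (I : instance) (p : placement) : Prop :=
  (forall i, (i < n I)%nat -> in_strip I i (p i)) /\
  (forall i j, (i < n I)%nat -> (j < n I)%nat -> i <> j ->
     open_disjoint I i (p i) j (p j)).

Definition height (I : instance) (p : placement) : R :=
  fold_right Rmax 0 (map (fun i => snd (p i) + ht I i) (seq 0 (n I))).

Definition is_opt_height (I : instance) (h : R) : Prop :=
  (exists p, feasible I p /\ height I p = h) /\
  (forall p, feasible I p -> h <= height I p).

Definition ordering (I : instance) (o : list nat) : Prop :=
  Permutation o (seq 0 (n I)).

Definition feasible_wrt (I : instance) (p : placement) (placed : list nat)
    (r : nat) (c : R * R) : Prop :=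
  in_strip I r c /\ forall j, In j placed -> open_disjoint I r c j (p j).

Definition lex_yx_le (c d : R * R) : Prop :=
  snd c < snd d \/ (snd c = snd d /\ fst c <= fst d).

Definition is_BL_packing (I : instance) (o : list nat) (p : placement) : Prop :=
  forall m, (m < length o)%nat ->
    let r := nth m o 0%nat in
    let prev := firstn m o in
    feasible_wrt I p prev r (p r) /\
    forall c, feasible_wrt I p prev r c -> lex_yx_le (p r) c.

Definition BL_height (I : instance) (o : list nat) (h : R) : Prop :=
  exists p, is_BL_packing I o p /\ height I p = h.

Definition k_neighbor (k : nat) (o o' : list nat) : Prop :=
  Permutation o o' /\
  (length (filter (fun m => negb (Nat.eqb (nth m o 0%nat) (nth m o' 0%nat)))
                  (seq 0 (length o))) <= k)%nat.

Definition improves (I : instance) (o o' : list nat) : Prop :=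
  exists h h', BL_height I o h /\ BL_height I o' h' /\ h' < h.

Definition k_local_opt (I : instance) (k : nat) (o : list nat) : Prop :=
  forall o', k_neighbor k o o' -> ~ improves I o o'.

(** [ls_returns I k o f]: some run of the bottom-left k-local search started
    from ordering [o] stops at the local optimum [f] (the algorithm then
    returns the BL packing of [f]). *)
Inductive ls_returns (I : instance) (k : nat) : list nat -> list nat -> Prop :=
| ls_stop : forall o, k_local_opt I k o -> ls_returns I k o o
| ls_step : forall o o' f, k_neighbor k o o' -> improves I o o' ->
    ls_returns I k o' f -> ls_returns I k o f.

(* Main.v *)
Require Import Defs.
From Stdlib Require Import Reals List Permutation.
From Stdlib Require Import Lra Lia Arith Classical.
Import ListNotations.
Open Scope R_scope.

Definition sumw (I : instance) (l : list nat) : R :=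
  fold_right (fun i acc => wd I i + acc) 0 l.

Fixpoint row_placed (I : instance) (p : placement) (s : R) (l : list nat) : Prop :=
  match l with
  | [] => True
  | i :: l' => p i = (s, 0) /\ row_placed I p (s + wd I i) l'
  end.

Lemma overlap_not_disj I i ci j cj :
  0 < wd I i -> 0 < ht I i -> 0 < wd I j -> 0 < ht I j ->
  fst ci < fst cj + wd I j -> fst cj < fst ci + wd I i ->
  snd ci < snd cj + ht I j -> snd cj < snd ci + ht I i ->
  ~ open_disjoint I i ci j cj.
Proof.
  intros H1 H2 H3 H4 H5 H6 H7 H8 HD. apply HD.
  exists ((Rmax (fst ci) (fst cj) + Rmin (fst ci + wd I i) (fst cj + wd I j)) / 2).
  exists ((Rmax (snd ci) (snd cj) + Rmin (snd ci + ht I i) (snd cj + ht I j)) / 2).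
  unfold Rmax, Rmin.
  destruct (Rle_dec (fst ci) (fst cj)); destruct (Rle_dec (fst ci + wd I i) (fst cj + wd I j));
  destruct (Rle_dec (snd ci) (snd cj)); destruct (Rle_dec (snd ci + ht I i) (snd cj + ht I j));
  repeat split; lra.
Qed.

Lemma sep_disj I i ci j cj :
  (fst ci + wd I i <= fst cj \/ fst cj + wd I j <= fst ci \/
   snd ci + ht I i <= snd cj \/ snd cj + ht I j <= snd ci) ->
  open_disjoint I i ci j cj.
Proof.
  intros H [a [b Hab]]. lra.
Qed.

Lemma sumw_app I l1 l2 : sumw I (l1 ++ l2) = sumw I l1 + sumw I l2.
Proof. induction l1; simpl; [lra|]. unfold sumw in *; simpl; rewrite IHl1; lra. Qed.

Lemma sumw_nonneg I l : (forall i, 0 < wd I i) -> 0 <= sumw I l.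
Proof. intros H; induction l; simpl; [lra|]. specialize (H a). unfold sumw in *; simpl; lra. Qed.

Lemma sumw_perm I l l' : Permutation l l' -> sumw I l = sumw I l'.
Proof. induction 1; unfold sumw in *; simpl; try lra. Qed.

Lemma row_placed_app I p s l1 l2 :
  row_placed I p s (l1 ++ l2) <-> row_placed I p s l1 /\ row_placed I p (s + sumw I l1) l2.
Proof.
  revert s; induction l1 as [|i l1 IH]; intros s; simpl.
  - rewrite Rplus_0_r. tauto.
  - rewrite IH. replace (s + wd I i + sumw I l1) with (s + (wd I i + sumw I l1)) by lra.
    unfold sumw; simpl. tauto.
Qed.

Lemma row_in I p s l j : (forall i, 0 < wd I i) -> row_placed I p s l -> In j l ->
  snd (p j) = 0 /\ s <= fst (p j) /\ fst (p j) + wd I j <= s + sumw I l.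
Proof.
  intros Hw; revert s; induction l as [|i l IH]; intros s Hr Hin; simpl in *; [tauto|].
  destruct Hr as [Hi Hr]. pose proof (sumw_nonneg I l Hw).
  destruct Hin as [<- | Hin].
  - rewrite Hi; simpl. unfold sumw in *; simpl. pose proof (Hw i). repeat split; lra.
  - destruct (IH _ Hr Hin) as [A [B C]]. pose proof (Hw i). unfold sumw in *; simpl. repeat split; lra.
Qed.

Lemma row_cover I p s l : (forall i, 0 < wd I i) -> row_placed I p s l ->
  forall x, s <= x < s + sumw I l ->
  exists j, In j l /\ fst (p j) <= x < fst (p j) + wd I j /\ snd (p j) = 0.
Proof.
  intros Hw; revert s; induction l as [|i l IH]; intros s Hr x Hx; simpl in *.
  - unfold sumw in Hx; simpl in Hx; lra.
  - destruct Hr as [Hi Hr]. destruct (Rlt_dec x (s + wd I i)).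
    + exists i. rewrite Hi; simpl. repeat split; auto; lra.
    + destruct (IH _ Hr x) as [j [A B]].
      * unfold sumw in *; simpl in *; lra.
      * exists j; auto.
Qed.

Lemma lex_antisym c d : lex_yx_le c d -> lex_yx_le d c -> c = d.
Proof.
  destruct c as [c1 c2], d as [d1 d2]; unfold lex_yx_le; simpl; intros H1 H2.
  assert (c1 = d1 /\ c2 = d2) as [-> ->] by lra; reflexivity.
Qed.

Lemma bl_unique I p prev r c0 :
  feasible_wrt I p prev r c0 -> (forall c, feasible_wrt I p prev r c -> lex_yx_le c0 c) ->
  feasible_wrt I p prev r (p r) -> (forall c, feasible_wrt I p prev r c -> lex_yx_le (p r) c) ->
  p r = c0.
Proof. intros A B C D. apply lex_antisym; auto. Qed.

Lemma row_step I p l r : (forall i, 0 < wd I i) -> (forall i, 0 < ht I i) ->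
  row_placed I p 0 l -> sumw I l + wd I r <= W I ->
  feasible_wrt I p l r (sumw I l, 0) /\
  forall c, feasible_wrt I p l r c -> lex_yx_le (sumw I l, 0) c.
Proof.
  intros Hw Hh Hr Hs. pose proof (sumw_nonneg I l Hw). split.
  - split. unfold in_strip; simpl; lra.
    intros j Hj. destruct (row_in I p 0 l j Hw Hr Hj) as [A [B C]].
    apply sep_disj. right; left. simpl; lra.
  - intros [cx cy] [[Hs1 [Hs2 Hs3]] Hd]; simpl in *.
    unfold lex_yx_le; simpl.
    destruct (Rlt_dec 0 cy); [left; lra|right; split; [lra|]].
    destruct (Rle_dec (sumw I l) cx); auto. exfalso.
    destruct (row_cover I p 0 l Hw Hr cx) as [j [Hj [A B]]]; [lra|].
    refine (overlap_not_disj I r (cx,cy) j (p j) _ _ _ _ _ _ _ _ (Hd j Hj)); simpl; auto;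
    try rewrite B; pose proof (Hw r); pose proof (Hh j); pose proof (Hh r); lra.
Qed.

Lemma firstn_S_nth (l : list nat) m : (m < length l)%nat ->
  firstn (S m) l = firstn m l ++ [nth m l 0%nat].
Proof.
  revert m; induction l as [|x l IH]; intros m Hm; simpl in *; [lia|].
  destruct m; simpl; auto. rewrite IH by lia. reflexivity.
Qed.

Lemma sumw_firstn_mono I l a b : (forall i, 0 < wd I i) -> (a <= b)%nat ->
  sumw I (firstn a l) <= sumw I (firstn b l).
Proof.
  intros Hw Hab. assert (E := firstn_skipn a (firstn b l)).
  rewrite <- E. rewrite firstn_firstn, sumw_app. replace (Init.Nat.min a b) with a by lia.
  pose proof (sumw_nonneg I (skipn a (firstn b l)) Hw). lra.
Qed.

Lemma row_prefix I o p m : (forall i, 0 < wd I i) -> (forall i, 0 < ht I i) ->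
  is_BL_packing I o p -> (m <= length o)%nat -> sumw I (firstn m o) <= W I ->
  forall m', (m' <= m)%nat -> row_placed I p 0 (firstn m' o).
Proof.
  intros Hw Hh HBL Hm Hs m'. induction m' as [|m' IH]; intros Hm'.
  - simpl; auto.
  - rewrite firstn_S_nth by lia. apply row_placed_app. split; [apply IH; lia|].
    simpl. split; auto. rewrite Rplus_0_l.
    destruct (HBL m') as [F Mn]; [lia|]. simpl in F, Mn.
    assert (Hs' : sumw I (firstn (S m') o) <= W I).
    { eapply Rle_trans; [apply sumw_firstn_mono; eauto|exact Hs]. }
    rewrite firstn_S_nth, sumw_app in Hs' by lia. unfold sumw at 2 in Hs'; simpl in Hs'.
    destruct (row_step I p (firstn m' o) (nth m' o 0%nat) Hw Hh (IH ltac:(lia))) as [A B]; [lra|].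
    eapply bl_unique; eauto.
Qed.

Lemma fold_max_ge l x : In x l -> x <= fold_right Rmax 0 l.
Proof.
  induction l; simpl; [tauto|]. intros [<-|H]; [apply Rmax_l|].
  eapply Rle_trans; [apply IHl; auto| apply Rmax_r].
Qed.

Lemma fold_max_le l B : 0 <= B -> (forall x, In x l -> x <= B) -> fold_right Rmax 0 l <= B.
Proof.
  intros HB; induction l; simpl; intros H; auto. apply Rmax_lub; auto.
Qed.

Lemma height_ge I p i : (i < n I)%nat -> snd (p i) + ht I i <= height I p.
Proof.
  intros Hi; unfold height; apply fold_max_ge. apply in_map_iff. exists i; split; auto.
  apply in_seq; lia.
Qed.

Lemma height_le I p B : 0 <= B -> (forall i, (i < n I)%nat -> snd (p i) + ht I i <= B) -> height I p <= B.
Proof.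
  intros HB H; unfold height; apply fold_max_le; auto. intros x Hx.
  apply in_map_iff in Hx. destruct Hx as [i [<- Hi]]. apply in_seq in Hi. apply H; lia.
Qed.

Lemma search_nat (P : nat -> Prop) N : P 0%nat -> ~ P N -> exists m, (m < N)%nat /\ P m /\ ~ P (S m).
Proof.
  induction N; intros H0 HN; [tauto|].
  destruct (classic (P N)) as [HP|HP].
  - exists N; repeat split; auto.
  - destruct (IHN H0 HP) as [m [A B]]. exists m; split; auto.
Qed.

Definition NN (k : nat) : nat := (k + 2)%nat.
Definition aa (k : nat) : R := / (INR k + 3).
Definition isu (k i : nat) : bool := (NN k <=? i)%nat.
Definition wdf (k i : nat) : R := if isu k i then 1 else aa k.
Definition inst (k : nat) : instance :=
  mkInstance (INR (NN k) + aa k) (2 * NN k) (wdf k) (wdf k).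

Lemma INR_NN k : INR (NN k) = INR k + 2.
Proof. unfold NN. rewrite plus_INR. simpl. lra. Qed.

Lemma aa_pos k : 0 < aa k.
Proof. unfold aa. apply Rinv_0_lt_compat. pose proof (pos_INR k). lra. Qed.

Lemma NN_aa k : INR (NN k) * aa k < 1.
Proof.
  rewrite INR_NN. unfold aa. pose proof (pos_INR k).
  apply (Rmult_lt_reg_r (INR k + 3)); [lra|].
  rewrite Rmult_assoc, Rinv_l by lra. lra.
Qed.

Lemma aa_lt1 k : aa k < 1.
Proof. pose proof (NN_aa k). pose proof (aa_pos k). rewrite INR_NN in H.
  pose proof (pos_INR k). nra. Qed.

Lemma wd_pos k i : 0 < wd (inst k) i.
Proof. simpl. unfold wdf. destruct (isu k i); [lra|apply aa_pos]. Qed.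
Lemma ht_pos k i : 0 < ht (inst k) i.
Proof. apply (wd_pos k i). Qed.
Lemma wd_le1 k i : wd (inst k) i <= 1.
Proof. simpl. unfold wdf. destruct (isu k i); [lra|pose proof (aa_lt1 k); lra]. Qed.

Definition cu k l := length (filter (isu k) l).
Definition cs k l := length (filter (fun i => negb (isu k i)) l).
Definition has_unit k l := existsb (isu k) l.
Fixpoint lead k (l : list nat) : nat :=
  match l with [] => 0%nat | i :: l' => if isu k i then 0%nat else S (lead k l') end.
Fixpoint trail k (l : list nat) : nat :=
  match l with [] => 0%nat
  | i :: l' => if has_unit k l' then trail k l' else if isu k i then length l' else 0%nat end.

Lemma sumw_count k l : sumw (inst k) l = INR (cu k l) + INR (cs k l) * aa k.
Proof.
  induction l as [|i l IH]; unfold cu, cs in *; simpl; [lra|].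
  unfold sumw in *; simpl in *. rewrite IH. unfold wdf.
  destruct (isu k i); cbn [negb filter length]; rewrite ?S_INR; lra.
Qed.

Lemma lead_le k l : (lead k l <= cs k l)%nat.
Proof. induction l; unfold cs in *; simpl; auto. destruct (isu k a); simpl; lia. Qed.

Lemma no_unit_cs k l : has_unit k l = false -> cs k l = length l.
Proof. induction l; unfold cs in *; simpl; auto. destruct (isu k a); simpl; [discriminate|]. intros H; rewrite IHl; auto. Qed.

Lemma no_unit_cu k l : has_unit k l = false -> cu k l = 0%nat.
Proof. induction l; unfold cu in *; simpl; auto. destruct (isu k a); simpl; [discriminate|]. auto. Qed.

Lemma trail_le k l : (trail k l <= cs k l)%nat.
Proof.
  induction l as [|i l IH]; unfold cs in *; simpl; auto.
  destruct (has_unit k l) eqn:E; destruct (isu k i) eqn:E2; simpl; try lia.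
  rewrite <- (no_unit_cs k l E). unfold cs; lia.
Qed.

Lemma trail_app k l1 l2 : has_unit k l2 = true -> trail k (l1 ++ l2) = trail k l2.
Proof.
  intros H; induction l1 as [|i l1 IH]; simpl; auto.
  assert (has_unit k (l1 ++ l2) = true) as ->; auto.
  unfold has_unit; rewrite existsb_app; apply Bool.orb_true_iff; right; auto.
Qed.

Lemma cover k p l s : row_placed (inst k) p s l -> has_unit k l = true ->
  INR (cs k l) * aa k < 1 ->
  forall x, s + INR (lead k l) * aa k - 1 < x -> x < s + sumw (inst k) l - INR (trail k l) * aa k ->
  exists j, In j l /\ isu k j = true /\ fst (p j) < x + 1 /\ x < fst (p j) + 1 /\ snd (p j) = 0.
Proof.
  pose proof (aa_pos k) as Ha.
  revert s; induction l as [|i l IH]; intros s Hr Hu Hc x H1 H2; [discriminate|].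
  simpl in Hr. destruct Hr as [Hi Hr]. unfold sumw in H2; simpl in H2; fold (sumw (inst k) l) in H2.
  assert (Hwi : wd (inst k) i = if isu k i then 1 else aa k) by reflexivity.
  assert (Hwi' : wdf k i = if isu k i then 1 else aa k) by reflexivity.
  try rewrite Hwi in Hr; try rewrite Hwi in H2; try rewrite Hwi' in Hr; try rewrite Hwi' in H2. simpl in H1.
  try change (fold_right (fun (i : nat) (acc : R) => wdf k i + acc) 0 l) with (sumw (inst k) l) in H2.
  destruct (isu k i) eqn:Ei.
  - destruct (has_unit k l) eqn:Eu.
    + destruct (Rlt_dec x (s + 1)).
      * exists i. rewrite Hi; simpl. repeat split; auto; simpl in H1; lra.
      * assert (Hcs : cs k (i :: l) = cs k l) by (unfold cs; simpl; rewrite Ei; reflexivity).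
        rewrite Hcs in Hc.
        pose proof (le_INR _ _ (lead_le k l)).
        destruct (IH _ Hr eq_refl Hc x) as [j [A B]].
        -- assert (INR (lead k l) * aa k <= INR (cs k l) * aa k) by (apply Rmult_le_compat_r; lra). lra.
        -- cbn iota beta in H2. lra.
        -- exists j; split; [right|]; auto.
    + exists i. rewrite Hi. simpl. rewrite sumw_count, no_unit_cs, no_unit_cu in H2 by auto.
      cbn iota beta in H2. simpl length in H2. change (INR 0) with 0 in *. repeat split; auto; lra.
  - simpl in Hu. rewrite Ei in Hu. simpl in Hu. fold (has_unit k l) in Hu. rewrite Hu in H2.
    assert (Hcs : cs k (i :: l) = S (cs k l)) by (unfold cs; simpl; rewrite Ei; reflexivity).
    rewrite Hcs, S_INR in Hc.
    destruct (IH _ Hr Hu ltac:(lra) x) as [j [A B]].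
    + rewrite S_INR in H1. lra.
    + lra.
    + exists j; split; [right|]; auto.
Qed.

Lemma blocked k p l q : row_placed (inst k) p 0 l -> has_unit k l = true ->
  INR (cs k l) * aa k < 1 ->
  W (inst k) - 1 < sumw (inst k) l - INR (trail k l) * aa k -> isu k q = true ->
  forall c, feasible_wrt (inst k) p l q c -> 1 <= snd c.
Proof.
  intros Hr Hu Hc HW Hq [cx cy] [[S1 [S2 S3]] Hd]. simpl in *.
  assert (Hwq : wdf k q = 1) by (unfold wdf; rewrite Hq; reflexivity).
  rewrite Hwq in S2.
  destruct (Rle_dec 1 cy); auto. exfalso.
  pose proof (le_INR _ _ (lead_le k l)). pose proof (aa_pos k).
  assert (INR (lead k l) * aa k <= INR (cs k l) * aa k) by (apply Rmult_le_compat_r; lra).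
  destruct (cover k p l 0 Hr Hu Hc cx) as [j [Hj [Hju [A [B C]]]]]; [lra|simpl in HW; lra|].
  refine (overlap_not_disj (inst k) q (cx,cy) j (p j) _ _ _ _ _ _ _ _ (Hd j Hj));
    try apply wd_pos; try apply ht_pos; simpl; rewrite ?Hwq; try rewrite C;
    try (unfold wdf; rewrite Hju); lra.
Qed.

Lemma filter_all {A} (f : A -> bool) l : (forall x, In x l -> f x = true) -> filter f l = l.
Proof. induction l; simpl; intros H; auto. rewrite H by auto. rewrite IHl; auto. Qed.
Lemma filter_none {A} (f : A -> bool) l : (forall x, In x l -> f x = false) -> filter f l = [].
Proof. induction l; simpl; intros H; auto. rewrite H by auto. rewrite IHl; auto. Qed.

Lemma cnt_seq k j : cs k (seq 0 (NN k + j)) = NN k /\ cu k (seq 0 (NN k + j)) = j.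
Proof.
  rewrite seq_app. unfold cs, cu. rewrite !filter_app, !length_app.
  rewrite (filter_all _ (seq 0 (NN k))), (filter_none _ (seq (0 + NN k) j)),
          (filter_none _ (seq 0 (NN k))), (filter_all _ (seq (0 + NN k) j)).
  - rewrite !length_seq; simpl; lia.
  - intros x Hx; apply in_seq in Hx; unfold isu; apply Nat.leb_le; lia.
  - intros x Hx; apply in_seq in Hx; unfold isu; apply Nat.leb_gt; lia.
  - intros x Hx; apply in_seq in Hx; unfold isu; apply Bool.negb_false_iff, Nat.leb_le; lia.
  - intros x Hx; apply in_seq in Hx; unfold isu; apply Bool.negb_true_iff, Nat.leb_gt; lia.
Qed.

Lemma cu_cs_len k l : (cu k l + cs k l = length l)%nat.
Proof. apply filter_length. Qed.
Lemma cs_app k l1 l2 : cs k (l1 ++ l2) = (cs k l1 + cs k l2)%nat.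
Proof. unfold cs; rewrite filter_app, length_app; auto. Qed.
Lemma cu_app k l1 l2 : cu k (l1 ++ l2) = (cu k l1 + cu k l2)%nat.
Proof. unfold cu; rewrite filter_app, length_app; auto. Qed.

Lemma cs_bound k l : NoDup l -> (cs k l <= NN k)%nat.
Proof.
  intros H. unfold cs. rewrite <- (length_seq (NN k) 0).
  apply NoDup_incl_length. apply NoDup_filter; auto.
  intros x Hx. apply filter_In in Hx as [_ Hx]. apply Bool.negb_true_iff, Nat.leb_gt in Hx.
  apply in_seq; lia.
Qed.

Lemma cu_bound k l : NoDup l -> (forall x, In x l -> (x < 2 * NN k)%nat) -> (cu k l <= NN k)%nat.
Proof.
  intros H Hb. unfold cu. rewrite <- (length_seq (NN k) (NN k)).
  apply NoDup_incl_length. apply NoDup_filter; auto.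
  intros x Hx. apply filter_In in Hx as [Hx1 Hx]. apply Nat.leb_le in Hx.
  apply Hb in Hx1. apply in_seq; lia.
Qed.

Lemma has_unit_cu k l : (0 < cu k l)%nat -> has_unit k l = true.
Proof.
  induction l; unfold cu, has_unit in *; simpl; [lia|].
  destruct (isu k a); simpl; auto.
Qed.

Lemma main_lb k o p : Permutation o (seq 0 (2 * NN k)) -> is_BL_packing (inst k) o p ->
  (2 <= cs k (firstn (NN k) o))%nat -> 2 <= height (inst k) p.
Proof.
  intros HP HBL H2.
  pose proof (aa_pos k) as Ha. pose proof (NN_aa k) as HNa. pose proof (INR_NN k) as HNN.
  pose proof (pos_INR k) as Hk.
  assert (Hlen : length o = (2 * NN k)%nat) by (rewrite (Permutation_length HP), length_seq; auto).
  assert (HND : NoDup o) by (apply (Permutation_NoDup (Permutation_sym HP)), seq_NoDup).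
  assert (Hlt : forall x, In x o -> (x < 2 * NN k)%nat).
  { intros x Hx. apply (Permutation_in _ HP), in_seq in Hx. lia. }
  assert (Hsum : sumw (inst k) o = INR (NN k) + INR (NN k) * aa k).
  { rewrite (sumw_perm _ _ _ HP). replace (2 * NN k)%nat with (NN k + NN k)%nat by lia.
    rewrite sumw_count. destruct (cnt_seq k (NN k)) as [-> ->]. lra. }
  set (fits := fun m => sumw (inst k) (firstn m o) <= W (inst k)).
  destruct (search_nat fits (2 * NN k)) as [m [Hm [Hf Hnf]]].
  - unfold fits; simpl. unfold sumw; simpl. lra.
  - unfold fits. rewrite firstn_all2 by lia. rewrite Hsum. simpl. nra.
  - unfold fits in Hf, Hnf.
    pose proof (row_prefix (inst k) o p m (wd_pos k) (ht_pos k) HBL ltac:(lia) Hf m (le_n _)) as Hrow.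
    set (l := firstn m o) in *. set (q := nth m o 0%nat).
    assert (HS : firstn (S m) o = l ++ [q]) by (apply firstn_S_nth; lia).
    rewrite HS, sumw_app in Hnf. unfold sumw at 2 in Hnf; simpl in Hnf.
    assert (HND2 : NoDup (l ++ [q])).
    { rewrite <- HS. apply (NoDup_app_remove_r _ (skipn (S m) o)). rewrite firstn_skipn; auto. }
    assert (Hin2 : forall x, In x (l ++ [q]) -> In x o).
    { intros x Hx. rewrite <- HS in Hx. rewrite <- (firstn_skipn (S m) o). apply in_or_app; auto. }
    assert (Hcs := cs_bound k _ HND2). assert (Hcu := cu_bound k _ HND2 (fun x H => Hlt x (Hin2 x H))).
    rewrite cs_app in Hcs. rewrite cu_app in Hcu.
    assert (Hsl := sumw_count k l). 
    assert (Hlenl : length l = m) by (unfold l; apply firstn_length_le; lia).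
    assert (Hcl := cu_cs_len k l).
    assert (Hl1 : firstn (NN k) l = firstn (NN k) o -> (NN k <= m)%nat -> (2 <= cs k l)%nat).
    { intros E Hm'. rewrite <- (firstn_skipn (NN k) l), cs_app, E. lia. }
    assert (Hfl : (NN k <= m)%nat -> firstn (NN k) l = firstn (NN k) o).
    { intros Hm'. unfold l. rewrite firstn_firstn. f_equal. lia. }
    destruct (HBL m) as [Fq _]; [lia|]. simpl in Fq. fold l q in Fq.
    assert (HqIn : In q o) by (apply nth_In; lia).
    destruct (isu k q) eqn:Eq.
    +
      assert (Hwq : wd (inst k) q = 1) by (simpl; unfold wdf; rewrite Eq; auto).
      unfold cu, cs in Hcs, Hcu; simpl in Hcs, Hcu; rewrite Eq in Hcs, Hcu; simpl in Hcs, Hcu.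
      fold (cu k l) (cs k l) in Hcs, Hcu.
      assert (Hcsa : INR (cs k l) * aa k < 1).
      { eapply Rle_lt_trans; [|exact HNa]. apply Rmult_le_compat_r; [lra|]. apply le_INR; lia. }
      assert (Hcu1 : (k < cu k l)%nat).
      { apply INR_lt. simpl W in Hf, Hnf. try rewrite Hwq in Hnf; try (unfold wdf in Hnf; rewrite Eq in Hnf). lra. }
      assert (Hcs2 : (1 < cs k l)%nat).
      { apply INR_lt. simpl. assert (Hc: cu k l = (k+1)%nat) by (unfold NN in Hcu; lia).
        rewrite Hc, plus_INR in Hsl. simpl W in Hnf. try rewrite Hwq in Hnf; try (unfold wdf in Hnf; rewrite Eq in Hnf). simpl in Hsl.
        apply (Rmult_lt_reg_r (aa k)); lra. }
      assert (HmN : (NN k <= m)%nat) by (unfold NN in *; lia).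
      specialize (Hl1 (Hfl HmN) HmN).
      set (l1 := firstn (NN k) l) in *. set (l2 := skipn (NN k) l).
      assert (Hsplit : l = l1 ++ l2) by (symmetry; apply firstn_skipn).
      assert (Hlen1 : length l1 = NN k) by (unfold l1; apply firstn_length_le; lia).
      pose proof (cu_cs_len k l1) as Hc1.
      assert (Hcs1 : (2 <= cs k l1)%nat) by (assert (E : l1 = firstn (NN k) o) by (apply Hfl; auto); rewrite E; auto).
      assert (Hcul : cu k l = (cu k l1 + cu k l2)%nat) by (rewrite Hsplit at 1; apply cu_app).
      assert (Hcsl : cs k l = (cs k l1 + cs k l2)%nat) by (rewrite Hsplit at 1; apply cs_app).
      assert (Hu2 : has_unit k l2 = true) by (apply has_unit_cu; unfold NN in *; lia).
      assert (Htr : trail k l = trail k l2) by (rewrite Hsplit at 1; apply trail_app; auto).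
      pose proof (trail_le k l2) as Ht2.
      assert (Htr2 : INR (trail k l) + 2 <= INR (cs k l)).
      { rewrite Htr. replace 2 with (INR 2) by (simpl; lra). rewrite <- plus_INR. apply le_INR. lia. }
      assert (Hb : 1 <= snd (p q)).
      { apply (blocked k p l q Hrow); auto.
        - apply has_unit_cu; lia.
        - simpl W. assert (Hc: cu k l = (k+1)%nat) by (unfold NN in Hcu; lia).
          rewrite Hsl, Hc, plus_INR. simpl INR. nra. }
      pose proof (height_ge (inst k) p q ltac:(simpl; apply Hlt; auto)).
      simpl ht in H. unfold wdf in H. rewrite Eq in H. lra.
    +
      exfalso.
      assert (Hwq : wd (inst k) q = aa k) by (simpl; unfold wdf; rewrite Eq; auto).
      unfold cu, cs in Hcs, Hcu; simpl in Hcs, Hcu; rewrite Eq in Hcs, Hcu; simpl in Hcs, Hcu.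
      fold (cu k l) (cs k l) in Hcs, Hcu.
      assert (Hcsa : INR (cs k l) * aa k < 1).
      { eapply Rle_lt_trans; [|exact HNa]. apply Rmult_le_compat_r; [lra|]. apply le_INR; lia. }
      assert (Hcu1 : (S k < cu k l)%nat).
      { apply INR_lt. simpl W in Hf, Hnf. try rewrite Hwq in Hnf; try (unfold wdf in Hnf; rewrite Eq in Hnf). rewrite S_INR. lra. }
      assert (HmN : (NN k <= m)%nat) by (unfold NN in *; lia).
      specialize (Hl1 (Hfl HmN) HmN).
      assert (Hc: cu k l = NN k) by (unfold NN in *; lia).
      assert (INR 2 <= INR (cs k l)) by (apply le_INR; auto).
      simpl in H. simpl W in Hf. rewrite Hsl, Hc in Hf. nra.
Qed.

Definition mm (k : nat) : nat := (NN k + S k)%nat.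

Lemma firstn_seq m s len : (m <= len)%nat -> firstn m (seq s len) = seq s m.
Proof.
  revert m s; induction len; intros m s H; destruct m; simpl; auto; try lia.
  rewrite IHlen by lia; auto.
Qed.

Lemma W_inst k : W (inst k) = INR (NN k) + aa k.
Proof. reflexivity. Qed.

Lemma sumw_mm k : sumw (inst k) (seq 0 (mm k)) = INR (S k) + INR (NN k) * aa k.
Proof. unfold mm. rewrite sumw_count. destruct (cnt_seq k (S k)) as [-> ->]. lra. Qed.

Lemma sumw_mm_le k : sumw (inst k) (seq 0 (mm k)) <= W (inst k).
Proof.
  rewrite sumw_mm, W_inst, INR_NN, S_INR. pose proof (NN_aa k). pose proof (aa_pos k).
  rewrite INR_NN in H. pose proof (pos_INR k). nra.
Qed.

Lemma isu_mm k : isu k (mm k) = true.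
Proof. unfold isu, mm. apply Nat.leb_le. lia. Qed.

Lemma top_feasible k p : row_placed (inst k) p 0 (seq 0 (mm k)) ->
  feasible_wrt (inst k) p (seq 0 (mm k)) (mm k) (0, 1).
Proof.
  intros Hr. split.
  - unfold in_strip; simpl. unfold wdf; rewrite isu_mm. rewrite INR_NN.
    pose proof (aa_pos k). pose proof (pos_INR k). lra.
  - intros j Hj. destruct (row_in _ _ _ _ j (wd_pos k) Hr Hj) as [A _].
    apply sep_disj. right; right; right. simpl. rewrite A. pose proof (wd_le1 k j). simpl in H. lra.
Qed.

Lemma blocked_mm k p : row_placed (inst k) p 0 (seq 0 (mm k)) ->
  forall c, feasible_wrt (inst k) p (seq 0 (mm k)) (mm k) c -> 1 <= snd c.
Proof.
  intros Hr. pose proof (aa_pos k). pose proof (NN_aa k).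
  assert (Hsplit : seq 0 (mm k) = seq 0 (NN k) ++ seq (NN k) (S k)) by (unfold mm; rewrite seq_app; auto).
  destruct (cnt_seq k (S k)) as [C1 C2]. destruct (cnt_seq k 0) as [C3 C4].
  rewrite Nat.add_0_r in C3, C4.
  fold (mm k) in C1, C2.
  rewrite Hsplit, cs_app, C3 in C1. rewrite Hsplit, cu_app, C4 in C2.
  apply blocked; auto.
  - apply has_unit_cu. rewrite Hsplit, cu_app. lia.
  - rewrite Hsplit, cs_app. replace (cs k (seq (NN k) (S k))) with 0%nat by lia.
    rewrite C3, Nat.add_0_r; auto.
  - assert (Hu : has_unit k (seq (NN k) (S k)) = true) by (apply has_unit_cu; lia).
    rewrite Hsplit, (trail_app k _ _ Hu). pose proof (trail_le k (seq (NN k) (S k))).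
    replace (trail k (seq (NN k) (S k))) with 0%nat by lia. rewrite <- Hsplit, sumw_mm, W_inst.
    rewrite INR_NN, S_INR. change (INR 0) with 0. pose proof (pos_INR k). nra.
  - apply isu_mm.
Qed.

Lemma o0_lb k : (2 <= cs k (firstn (NN k) (seq 0 (2 * NN k))))%nat.
Proof.
  rewrite firstn_seq by lia. destruct (cnt_seq k 0) as [C _]. rewrite Nat.add_0_r in C.
  rewrite C. unfold NN; lia.
Qed.

Lemma o0_height k p : is_BL_packing (inst k) (seq 0 (2 * NN k)) p -> height (inst k) p = 2.
Proof.
  intros HBL. apply Rle_antisym.
  - assert (Hlen : length (seq 0 (2 * NN k)) = S (mm k)) by (rewrite length_seq; unfold mm, NN; lia).
    assert (Hf : firstn (mm k) (seq 0 (2 * NN k)) = seq 0 (mm k)) by (apply firstn_seq; unfold mm, NN; lia).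
    pose proof (row_prefix (inst k) _ p (mm k) (wd_pos k) (ht_pos k) HBL ltac:(lia)
      ltac:(rewrite Hf; apply sumw_mm_le) (mm k) (le_n _)) as Hr.
    rewrite Hf in Hr.
    destruct (HBL (mm k)) as [_ Mn]; [lia|]. cbv zeta in Mn.
    rewrite seq_nth in Mn by (unfold mm, NN; lia). rewrite Hf in Mn. simpl plus in Mn.
    pose proof (Mn _ (top_feasible k p Hr)) as Hl. unfold lex_yx_le in Hl; simpl in Hl.
    apply height_le; [lra|]. intros i Hi. simpl in Hi.
    pose proof (wd_le1 k i). simpl ht. simpl wd in H.
    destruct (Nat.eq_dec i (mm k)) as [->|Hne]; [lra|].
    assert (Hin : In i (seq 0 (mm k))) by (apply in_seq; unfold mm, NN in *; lia).
    destruct (row_in _ _ _ _ i (wd_pos k) Hr Hin) as [A _].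
    rewrite A; lra.
  - exact (main_lb k (seq 0 (2 * NN k)) p (Permutation_refl _) HBL (o0_lb k)).
Qed.

Definition p0 (k : nat) : placement :=
  fun i => if (i <? mm k)%nat then (sumw (inst k) (seq 0 i), 0) else (0, 1).

Lemma p0_row k j : (j <= mm k)%nat -> row_placed (inst k) (p0 k) 0 (seq 0 j).
Proof.
  induction j; intros H; [simpl; auto|].
  rewrite seq_S. apply row_placed_app. split; [apply IHj; lia|]. simpl. split; auto.
  unfold p0. replace (j <? mm k)%nat with true by (symmetry; apply Nat.ltb_lt; lia). f_equal. lra.
Qed.

Lemma p0_BL k : is_BL_packing (inst k) (seq 0 (2 * NN k)) (p0 k).
Proof.
  intros j Hj. rewrite length_seq in Hj. simpl.
  rewrite seq_nth by auto. rewrite firstn_seq by lia. simpl.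
  destruct (Nat.lt_ge_cases j (mm k)) as [Hlt|Hge].
  - assert (E : p0 k j = (sumw (inst k) (seq 0 j), 0)) by
      (unfold p0; replace (j <? mm k)%nat with true by (symmetry; apply Nat.ltb_lt; lia); auto).
    rewrite E. apply row_step; try apply wd_pos; try apply ht_pos. apply p0_row; lia.
    eapply Rle_trans; [|apply sumw_mm_le].
    replace (sumw (inst k) (seq 0 j) + wd (inst k) j) with (sumw (inst k) (seq 0 (S j))).
    + rewrite <- (firstn_seq (S j) 0 (mm k)) by lia. rewrite <- (firstn_seq (mm k) 0 (mm k)) at 2 by lia.
      apply sumw_firstn_mono; [apply wd_pos|lia].
    + rewrite seq_S, sumw_app. unfold sumw at 2; simpl. lra.
  - assert (Hj' : j = mm k) by (unfold mm, NN in *; lia). subst j.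
    assert (E : p0 k (mm k) = (0, 1)) by
      (unfold p0; replace (mm k <? mm k)%nat with false by (symmetry; apply Nat.ltb_ge; lia); auto).
    rewrite E. pose proof (p0_row k (mm k) (le_n _)) as Hr. split.
    + apply top_feasible; auto.
    + intros c Hc. pose proof (blocked_mm k _ Hr c Hc). unfold lex_yx_le; simpl.
      destruct Hc as [[S1 _] _]. destruct (Rlt_dec 1 (snd c)); [left; lra|right; lra].
Qed.

Lemma firstn_map_nth (l : list nat) m : (m <= length l)%nat ->
  firstn m l = map (fun i => nth i l 0%nat) (seq 0 m).
Proof.
  revert m; induction l as [|x l IH]; intros m H; destruct m; simpl in *; auto; try lia.
  f_equal. rewrite IH by lia. rewrite <- seq_shift, map_map. reflexivity.
Qed.

Lemma filter_map_len (g : nat -> bool) (h : nat -> nat) l :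
  length (filter g (map h l)) = length (filter (fun x => g (h x)) l).
Proof. induction l; simpl; auto. destruct (g (h a)); simpl; auto. Qed.

Lemma filter_len_mono (f g : nat -> bool) l : (forall x, In x l -> f x = true -> g x = true) ->
  (length (filter f l) <= length (filter g l))%nat.
Proof.
  induction l; simpl; intros H; auto.
  destruct (f a) eqn:E; [rewrite (H a (or_introl eq_refl) E); simpl; apply le_n_S; auto|].
  destruct (g a); simpl; [apply le_S|]; auto.
Qed.

Lemma neighbor_cs k o' : k_neighbor k (seq 0 (2 * NN k)) o' -> (2 <= cs k (firstn (NN k) o'))%nat.
Proof.
  intros [HP Hk].
  assert (Hlen : length o' = (2 * NN k)%nat) by (rewrite <- (Permutation_length HP), length_seq; auto).
  rewrite length_seq in Hk.
  set (g := fun m => Nat.eqb (nth m (seq 0 (2 * NN k)) 0%nat) (nth m o' 0%nat)).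
  set (F := fun m : nat => negb (nth m (seq 0 (2 * NN k)) 0%nat =? nth m o' 0%nat)) in Hk.
  assert (E : seq 0 (2 * NN k) = seq 0 (NN k) ++ seq (NN k) (NN k))
    by (rewrite <- seq_app; f_equal; lia).
  rewrite E, filter_app, length_app in Hk.
  change F with (fun x => negb (g x)) in Hk.
  pose proof (filter_length g (seq 0 (NN k))) as HL. rewrite length_seq in HL.
  rewrite firstn_map_nth by lia. unfold cs. rewrite filter_map_len.
  eapply Nat.le_trans; [|apply (filter_len_mono g)].
  - unfold NN in *. lia.
  - intros x Hx Hg. apply in_seq in Hx. unfold g in Hg. apply Nat.eqb_eq in Hg.
    rewrite seq_nth in Hg by (unfold NN in *; lia). simpl in Hg. rewrite <- Hg.
    unfold isu. apply Bool.negb_true_iff, Nat.leb_gt. lia.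
Qed.

Definition popt (k : nat) : placement :=
  fun i => if isu k i then (INR (i - NN k), 0) else (INR (NN k), INR i * aa k).

Lemma opt_height k : is_opt_height (inst k) 1.
Proof.
  pose proof (aa_pos k) as Ha. pose proof (NN_aa k) as HNa.
  assert (HN : (NN k < 2 * NN k)%nat) by (unfold NN; lia).
  assert (Hu : isu k (NN k) = true) by (unfold isu; apply Nat.leb_le; lia).
  split.
  - exists (popt k). split.
    + split.
      * intros i Hi. simpl in Hi. unfold in_strip, popt; simpl. unfold wdf.
        destruct (isu k i) eqn:E; simpl.
        -- unfold isu in E. apply Nat.leb_le in E.
           pose proof (pos_INR (i - NN k)). rewrite <- S_INR.
           assert (INR (S (i - NN k)) <= INR (NN k)) by (apply le_INR; lia). lra.
        -- pose proof (pos_INR (NN k)). pose proof (pos_INR i). split; [lra|split; [lra|nra]].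
      * intros i j Hi Hj Hij. simpl in Hi, Hj. apply sep_disj. unfold popt; simpl; unfold wdf.
        destruct (isu k i) eqn:Ei, (isu k j) eqn:Ej; simpl; unfold isu in Ei, Ej;
          try apply Nat.leb_le in Ei; try apply Nat.leb_le in Ej;
          try apply Nat.leb_gt in Ei; try apply Nat.leb_gt in Ej.
        -- destruct (Nat.lt_ge_cases i j).
           ++ left. rewrite <- S_INR. apply le_INR. lia.
           ++ right; left. rewrite <- S_INR. apply le_INR. lia.
        -- left. rewrite <- S_INR. apply le_INR. lia.
        -- right; left. rewrite <- S_INR. apply le_INR. lia.
        -- destruct (Nat.lt_ge_cases i j).
           ++ right; right; left. assert (INR (S i) <= INR j) by (apply le_INR; lia).
              rewrite S_INR in H0. nra.
           ++ right; right; right. assert (INR (S j) <= INR i) by (apply le_INR; lia).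
              rewrite S_INR in H0. nra.
    + apply Rle_antisym.
      * apply height_le; [lra|]. intros i Hi. simpl in Hi. unfold popt; simpl; unfold wdf.
        destruct (isu k i) eqn:E; simpl; [lra|]. unfold isu in E; apply Nat.leb_gt in E.
        assert (INR (S i) <= INR (NN k)) by (apply le_INR; lia). rewrite S_INR in H. nra.
      * pose proof (height_ge (inst k) (popt k) (NN k) HN).
        assert (E : snd (popt k (NN k)) = 0) by (unfold popt; rewrite Hu; reflexivity).
        rewrite E in H. simpl ht in H. unfold wdf in H; rewrite Hu in H. lra.
  - intros p [Hs _]. destruct (Hs (NN k) HN) as [_ [_ Hy]].
    pose proof (height_ge (inst k) p (NN k) HN). simpl in H. unfold wdf in H; rewrite Hu in H. lra.
Qed.

Lemma local_opt k : k_local_opt (inst k) k (seq 0 (2 * NN k)).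
Proof.
  intros o' Hn [h [h' [[p [Hp Hh]] [[p' [Hp' Hh']] Hlt]]]].
  rewrite o0_height in Hh by auto. subst h.
  assert (2 <= height (inst k) p').
  { apply (main_lb k o'); auto. destruct Hn as [HP _]. apply Permutation_sym; auto.
    apply neighbor_cs; auto. }
  lra.
Qed.

Lemma ls_only k f : ls_returns (inst k) k (seq 0 (2 * NN k)) f -> f = seq 0 (2 * NN k).
Proof.
  intros H. inversion H; subst; auto. exfalso. apply (local_opt k o'); auto.
Qed.

Theorem theorem5 : forall k : nat,
  exists (I : instance) (o0 : list nat) (hopt : R),
    valid_instance I /\ (0 < n I)%nat /\ all_squares I /\
    ordering I o0 /\
    is_opt_height I hopt /\
    (exists f, ls_returns I k o0 f) /\
    (forall f, ls_returns I k o0 f ->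
       BL_height I f (2 * hopt) /\
       (forall h, BL_height I f h -> h = 2 * hopt)).
Proof.
  intros k. exists (inst k), (seq 0 (2 * NN k)), 1.
  split; [|split; [|split; [|split; [|split; [|split]]]]].
  - split.
    + simpl. pose proof (aa_pos k). rewrite INR_NN. pose proof (pos_INR k). lra.
    + intros i _. split; [apply wd_pos|split; [|apply ht_pos]].
      pose proof (wd_le1 k i). simpl in *. rewrite INR_NN. pose proof (aa_pos k). pose proof (pos_INR k). lra.
  - simpl. unfold NN. lia.
  - intros i _. reflexivity.
  - apply Permutation_refl.
  - apply opt_height.
  - exists (seq 0 (2 * NN k)). apply ls_stop. apply local_opt.
  - intros f Hf. apply ls_only in Hf. subst f. split.
    + exists (p0 k). split; [apply p0_BL|]. rewrite (o0_height k (p0 k) (p0_BL k)). lra.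
    + intros h [p [Hp Hh]]. rewrite o0_height in Hh by auto. lra.
Qed.
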